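(* For $r\ge1$ and $1\le l\le r$, \[ \frac{\partial}{\partial a_l}C_{1,r}(a_1,\dots,a_r)=-\sum_{k=l}^rC_{1,k-1}(a_1,\dots,a_{k-1})\,C_{1,r-k}(a_{k+1},\dots,a_r). \] Consequently, with $C_{1,r}(a)=C_{1,r}(a,\dots,a)$, \[ C_{1,r}'(a)=-\sum_{l=1}^r\sum_{k=l}^rC_{1,k-1}(a)C_{1,r-k}(a)=-\sum_{k=1}^rk\,C_{1,r-k}(a)\,C_{1,k-1}(a). \]
   Context: Bernoulli polynomials $B_n(a)$: $\sum_{n\ge0}B_n(a)x^n/n!=xe^{ax}/(e^x-1)$. For $r\ge1$, $S_r=\{(n_1,\dots,n_r)\in\mathbb Z_{\ge0}^r: n_1+\dots+n_r=r,\ n_{j+1}+\dots+n_r\le r-j\ (1\le j<r)\}$ and $C_{1,r}(a_1,\dots,a_r)=(-1)^r\sum_{(n_1,\dots,n_r)\in S_r}\prod_{j=1}^r\frac{B_{n_j}(a_j)}{n_j!}$. By convention $C_{1,0}()=C_{1,0}(a)=1$. *)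

(* Defs.v *)
From HB Require Import structures.
From mathcomp Require Import all_boot all_order all_algebra.
From mathcomp Require Import all_classical all_reals all_analysis.
Set Implicit Arguments. Unset Strict Implicit. Unset Printing Implicit Defensive.
Import Order.TTheory GRing.Theory Num.Theory.
Local Open Scope ring_scope.

(* Bernoulli polynomials via the generating function
     sum_n B_n(a) x^n/n! = x e^{ax}/(e^x - 1),
   i.e. (e^x - 1) * sum_n B_n(a) x^n/n! = x e^{ax}; comparing coefficients
   of x^(m+1)/(m+1)! gives  sum_{k<=m} C(m+1,k) B_k(a) = (m+1) a^m, i.e.
     B_m(a) = a^m - 1/(m+1) * sum_{k<m} C(m+1,k) B_k(a).
   bseq a m = [:: B_0(a); ...; B_m(a)]. *)
Fixpoint bseq (R : realType) (a : R) (m : nat) : seq R :=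
  match m with
  | 0 => [:: 1]
  | m'.+1 =>
      let s := bseq a m' in
      rcons s (a ^+ m'.+1
               - (m'.+2)%:R^-1 * \sum_(k < m'.+1) 'C(m'.+2, k)%:R * s`_k)
  end.

Definition bernoulli_poly (R : realType) (m : nat) (a : R) : R :=
  (bseq a m)`_m.

(* S_r, encoded with 0-based positions: n : 'I_r -> 'I_r.+1 (entries are
   automatically <= r since they sum to r); the position jj (0-based) holds
   n_{jj+1}. *)
Definition in_S (r : nat) (n : {ffun 'I_r -> 'I_r.+1}) : bool :=
  ((\sum_(j < r) (n j : nat))%N == r) &&
  [forall j : 'I_r, (0 < (j : nat))%N ==>
     ((\sum_(i < r | (j <= i)%N) (n i : nat))%N <= r - j)%N].

(* C_{1,r}(a_1,...,a_r), where the arguments are a 1, ..., a r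
   (the values of a at other indices are irrelevant).
   For r = 0 this is 1 (the single empty composition), matching the convention. *)
Definition C1 (R : realType) (r : nat) (a : nat -> R) : R :=
  (-1) ^+ r * \sum_(n : {ffun 'I_r -> 'I_r.+1} | in_S n)
     \prod_(j < r) (bernoulli_poly (n j) (a j.+1) / ((n j)`!)%:R).

Definition upd (R : realType) (a : nat -> R) (l : nat) (t : R) : nat -> R :=
  fun i => if i == l then t else a i.

(* Main.v *)
Require Import Defs.
From HB Require Import structures.
From mathcomp Require Import all_boot all_order all_algebra.
From mathcomp Require Import all_classical all_reals all_analysis.
From mathcomp Require Import zify ring lra.
Import Order.TTheory GRing.Theory Num.Theory.
Local Open Scope ring_scope.

Section D.
Set Implicit Arguments.
Variable R : realType.
Implicit Types (f g : R -> R) (x df dg : R).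

Lemma dB f g x df dg : is_derive x 1 f df -> is_derive x 1 g dg ->
  is_derive x 1 (fun t => f t - g t) (df - dg).
Proof. move=> Hf Hg; exact: (is_deriveB Hf Hg). Qed.

Lemma dD f g x df dg : is_derive x 1 f df -> is_derive x 1 g dg ->
  is_derive x 1 (fun t => f t + g t) (df + dg).
Proof. move=> Hf Hg; exact: (is_deriveD Hf Hg). Qed.

Lemma dM f g x df dg : is_derive x 1 f df -> is_derive x 1 g dg ->
  is_derive x 1 (fun t => f t * g t) (f x * dg + g x * df).
Proof. move=> Hf Hg; exact: (is_deriveM Hf Hg). Qed.

Lemma dC x (c : R) : is_derive x 1 (fun _ => c) 0.
Proof. exact: is_derive_cst. Qed.

Lemma dId x : is_derive x 1 (fun t : R => t) 1.
Proof. exact: is_derive_id. Qed.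

Lemma dcM f x (c : R) df : is_derive x 1 f df -> is_derive x 1 (fun t => c * f t) (c * df).
Proof. move=> Hf; apply: (is_derive_eq (dM (dC x c) Hf)). by rewrite mulr0 addr0. Qed.

Lemma dX x n : is_derive x 1 (fun t : R => t ^+ n) (n%:R * x ^+ n.-1).
Proof.
elim: n => [|n IH]; first by apply: (is_derive_eq (dC x 1)); rewrite mul0r.
have -> : (fun t : R => t ^+ n.+1) = (fun t => t ^+ n * t) by apply: funext => t; rewrite exprSr.
apply: (is_derive_eq (dM IH (dId x))).
case: n {IH} => [|n] /=; first by rewrite expr0; ring.
rewrite (mulrS _ n.+1) exprS; ring.
Qed.

Lemma dsum (I : finType) (P : pred I) (h : I -> R -> R) (dh : I -> R) x :
  (forall i, is_derive x 1 (h i) (dh i)) ->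
  is_derive x 1 (fun t => \sum_(i | P i) h i t) (\sum_(i | P i) dh i).
Proof.
move=> H; rewrite -fct_sumE.
elim/big_ind2 : _ => //; first exact: is_derive_cst.
move=> f1 d1 f2 d2 H1 H2; exact: is_deriveD.
Qed.

Lemma size_bseq (a : R) m : size (Defs.bseq a m) = m.+1.
Proof. by elim: m => //= m IH; rewrite size_rcons IH. Qed.

Lemma nth_bseq (a : R) m k : (k <= m)%N -> (Defs.bseq a m)`_k = bernoulli_poly k a.
Proof.
elim: m => [|m IH]; first by rewrite leqn0 => /eqP ->.
rewrite leq_eqVlt => /orP [/eqP ->|]; first by [].
rewrite ltnS => km /=; rewrite nth_rcons size_bseq ltnS km; exact: IH.
Qed.

Lemma bernS (a : R) m : bernoulli_poly m.+1 a =
  a ^+ m.+1 - (m.+2)%:R^-1 * \sum_(k < m.+1) 'C(m.+2, k)%:R * bernoulli_poly k a.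
Proof.
rewrite /bernoulli_poly /= nth_rcons size_bseq ltnn eqxx; congr (_ - _ * _).
by apply: eq_bigr => k _; rewrite nth_bseq // -ltnS.
Qed.

Lemma bern0 (a : R) : bernoulli_poly 0 a = 1.
Proof. by []. Qed.
Lemma is_derive_bern m (x : R) :
  is_derive x 1 (bernoulli_poly m) (m%:R * bernoulli_poly m.-1 x).
Proof.
elim/ltn_ind: m x => m IH x.
case: m IH => [|m] IH.
  have -> : bernoulli_poly 0 = (fun _ : R => 1 : R) by apply: funext.
  by apply: (is_derive_eq (dC x 1)); rewrite mul0r.
have -> : bernoulli_poly m.+1 = (fun t : R => t ^+ m.+1 -
   (m.+2)%:R^-1 * \sum_(k < m.+1) 'C(m.+2, k)%:R * bernoulli_poly k t).
  by apply: funext => t; rewrite bernS.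
have H := (dB (dX x m.+1) (dcM ((m.+2)%:R^-1) (@dsum 'I_m.+1 xpredT _ _ x (fun k : 'I_m.+1 => dcM ('C(m.+2, k)%:R) (IH k (ltn_ord k) x))))).
apply: (is_derive_eq H); clear H.
rewrite /= big_ord_recl /= mul0r mulr0 add0r.
have e : forall j : 'I_m, 'C(m.+2, (bump 0 j))%:R * ((bump 0 j)%:R * bernoulli_poly (bump 0 j).-1 x)
    = (m.+2)%:R * ('C(m.+1, j)%:R * bernoulli_poly j x) :> R.
  move=> j; rewrite /bump /= add1n mulrA -natrM mulnC -mul_bin_diag natrM /= mulrA //.
rewrite (eq_bigr _ (fun j _ => e j)) -mulr_sumr mulrA mulVf ?pnatr_eq0 // mul1r.
case: m IH e => [|m] IH e /=.
  by rewrite big_ord0 subr0 expr0 mulr1.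
by rewrite bernS mulrBr mulrA divff ?pnatr_eq0 // mul1r.
Qed.

End D.
Section Nat.
Set Implicit Arguments.
Local Open Scope nat_scope.

Definition nv q M (n : {ffun 'I_q -> 'I_M}) (j : nat) : nat :=
  if (insub j : option 'I_q) is Some i then nat_of_ord (n i) else 0.

Lemma nvE q M (n : {ffun 'I_q -> 'I_M}) (i : 'I_q) : nv n i = n i.
Proof. by rewrite /nv valK. Qed.

Lemma nv_out q M (n : {ffun 'I_q -> 'I_M}) j : q <= j -> nv n j = 0.
Proof. by move=> h; rewrite /nv insubN // -leqNgt. Qed.

Lemma nv_le q M (n : {ffun 'I_q -> 'I_M.+1}) j : nv n j <= M.
Proof.
case: (ltnP j q) => h; last by rewrite nv_out.
by rewrite -[j]/(nat_of_ord (Ordinal h)) nvE -ltnS.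
Qed.

Lemma nv_inj q M (n1 n2 : {ffun 'I_q -> 'I_M}) :
  (forall j, j < q -> nv n1 j = nv n2 j) -> n1 = n2.
Proof.
move=> h; apply/ffunP => i; apply: val_inj => /=.
by rewrite -!nvE h.
Qed.

Definition ps (f : nat -> nat) j := \sum_(0 <= i < j) f i.

Lemma ps0 f : ps f 0 = 0.
Proof. by rewrite /ps big_geq. Qed.

Lemma psS f j : ps f j.+1 = ps f j + f j.
Proof. by rewrite /ps big_nat_recr. Qed.

Lemma ps_mono f i j : i <= j -> ps f i <= ps f j.
Proof.
move=> h; rewrite /ps (big_cat_nat (leq0n i) h) /=; exact: leq_addr.
Qed.

Lemma ps_ext f g j : (forall i, i < j -> f i = g i) -> ps f j = ps g j.
Proof. move=> h; rewrite /ps big_nat_cond [RHS]big_nat_cond; apply: eq_bigr => i /andP [/andP [_ hi] _]; exact: h. Qed.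

Lemma ps_shift f a j : ps f (a + j) = ps f a + ps (fun i => f (i + a)) j.
Proof.
elim: j => [|j IH]; first by rewrite addn0 ps0 addn0.
by rewrite addnS !psS IH addnA (addnC j a).
Qed.

Definition Sb r (f : nat -> nat) : bool :=
  (ps f r == r) && [forall j : 'I_r, j <= ps f j].

Lemma SbP r f : reflect (ps f r = r /\ forall j, j < r -> j <= ps f j) (Sb r f).
Proof.
apply: (iffP andP) => [[/eqP h /forallP h2]|[h1 h2]]; split => //.
- by move=> j hj; exact: (h2 (Ordinal hj)).
- by apply/eqP.
- by apply/forallP => j; apply: h2.
Qed.

Lemma in_S_Sb r (n : {ffun 'I_r -> 'I_r.+1}) : in_S n = Sb r (nv n).
Proof.
have htot : (\sum_(j < r) (n j : nat)) = ps (nv n) r.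
  by rewrite /ps big_mkord; apply: eq_bigr => i _; rewrite nvE.
have hsuf : forall j : 'I_r, (\sum_(i < r | j <= i) (n i : nat)) = ps (nv n) r - ps (nv n) j.
  move=> j; rewrite /ps (big_cat_nat (leq0n j) (ltnW (ltn_ord j))) /= addKn.
  rewrite big_geq_mkord; apply: eq_bigr => i _; by rewrite nvE.
rewrite /in_S /Sb htot; case: eqP => //= hr.
apply/forallP/forallP => h j.
- case: (posnP j) => [->|jp] //.
  have := implyP (h j) jp; rewrite hsuf hr.
  have := @ps_mono (nv n) _ _ (ltnW (ltn_ord j)); rewrite hr; have := ltn_ord j; lia.
- apply/implyP => _; rewrite hsuf hr; have := h j; have := ltn_ord j; have := @ps_mono (nv n) _ _ (ltnW (ltn_ord j)); rewrite hr; lia.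
Qed.
End Nat.

Section Core.
Variable R : realType.
Local Open Scope ring_scope.

Definition E (p : nat) (x : R) : R := bernoulli_poly p x / (p`!)%:R.
Definition D (p : nat) (x : R) : R := if p is p'.+1 then E p' x else 0.

Lemma E0 x : E 0 x = 1.
Proof. by rewrite /E /= divr1. Qed.

Lemma C1E r (a : nat -> R) : C1 r a = (-1) ^+ r *
  \sum_(n : {ffun 'I_r -> 'I_r.+1} | Sb r (nv n)) \prod_(j < r) E (nv n j) (a j.+1).
Proof.
rewrite /C1; congr (_ * _); apply: eq_big => n; first exact: in_S_Sb.
by move=> _; apply: eq_bigr => j _; rewrite nvE.
Qed.

Variables (r l0 : nat) (a : nat -> R).
Hypothesis hl : (l0 < r)%N.

Definition g (n : {ffun 'I_r -> 'I_r.+1}) j := (nv n j - (j == l0))%N.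
Definition PP (n : {ffun 'I_r -> 'I_r.+1}) := Sb r (nv n) && (0 < nv n l0)%N.
Definition blk k0 (n : {ffun 'I_r -> 'I_r.+1}) := (ps (g n) k0.+1 == k0) &&
  [forall j : 'I_k0, (l0 <= j)%N ==> (ps (g n) j.+1 != j)].
Definition W (n : {ffun 'I_r -> 'I_r.+1}) := \prod_(j < r) E (g n j) (a j.+1).

Lemma ps_g n : (0 < nv n l0)%N -> forall k, ps (nv n) k = (ps (g n) k + (l0 < k))%N.
Proof.
move=> hn; elim=> [|k IH]; first by rewrite !ps0.
rewrite !psS IH /g; case: (ltngtP l0 k) => h.
- have h' : (l0 < k.+1)%N by lia.
  by rewrite h' /= subn0 addn1 addnS addn0.
- rewrite ltnS leqNgt h /= subn0 addn0 addn0 //.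
- move: hn; rewrite h ltnSn /= addn0 => hn; lia.
Qed.

Lemma step1 : \sum_(n : {ffun 'I_r -> 'I_r.+1} | Sb r (nv n))
   \prod_(j < r) (if (j : nat) == l0 then D (nv n j) (a j.+1) else E (nv n j) (a j.+1))
  = \sum_(n | PP n) W n.
Proof.
rewrite /PP [RHS]big_mkcondr; apply: eq_bigr => n _.
rewrite (bigD1 (Ordinal hl)) //= eqxx /W [in RHS](bigD1 (Ordinal hl)) //=.
have -> : \prod_(j < r | j != Ordinal hl)
   (if (j : nat) == l0 then D (nv n j) (a j.+1) else E (nv n j) (a j.+1))
  = \prod_(j < r | j != Ordinal hl) E (g n j) (a j.+1).
  apply: eq_bigr => j hj.
  have /negbTE hj' : (j : nat) != l0.
    by apply: contra hj => /eqP h; apply/eqP; apply: val_inj.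
  by rewrite hj' /g hj' subn0.
rewrite /g eqxx; case: (nv n l0) => [|p] /=; first by rewrite mul0r.
by rewrite subn1.
Qed.

Lemma blk_uniq n k k' : (l0 <= k)%N -> (l0 <= k')%N -> blk k n -> blk k' n -> k = k'.
Proof.
move=> h1 h2 /andP [/eqP e1 /forallP f1] /andP [/eqP e2 /forallP f2].
case: (ltngtP k k') => // h.
- by have := implyP (f2 (Ordinal h)) h1; rewrite /= e1 eqxx.
- by have := implyP (f1 (Ordinal h)) h2; rewrite /= e2 eqxx.
Qed.

Lemma blk_ex n : PP n -> exists2 k, (l0 <= k < r)%N & blk k n.
Proof.
move=> /andP [/SbP [h1 h2] h3].
have hr : ps (g n) r = r.-1 by have := ps_g n h3 r; rewrite h1 hl; lia.
have ex : exists k, (l0 <= k)%N && (ps (g n) k.+1 == k).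
  by exists r.-1; rewrite prednK ?hr ?eqxx ?andbT; lia.
case: (ex_minnP ex) => k /andP [hk1 /eqP hk2] hmin.
exists k.
  have hw : (l0 <= r.-1)%N && (ps (g n) r.-1.+1 == r.-1).
    by rewrite prednK ?hr ?eqxx ?andbT; lia.
  have := hmin _ hw; lia.
rewrite /blk hk2 eqxx /=; apply/forallP => j; apply/implyP => hj.
apply/negP => /eqP hj2.
have := hmin j; rewrite hj hj2 eqxx => /(_ isT); have := ltn_ord j; lia.
Qed.

Lemma step2 : \sum_(n | PP n) W n =
  \sum_(l0 <= k0 < r) \sum_(n | PP n && blk k0 n) W n.
Proof.
rewrite -(exchange_big_dep xpredT) //=; apply: eq_bigr => n Pn.
have [k hk bk] := blk_ex n Pn.
rewrite big_nat_cond big_mkcond (bigD1_seq k) ?mem_index_iota ?iota_uniq //=.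
rewrite hk bk /= big1 ?addr0 // => i ne; case: ifP => // /andP [/andP [h1 _] hb].
move: ne => /eqP ne; move: hk => /andP [hk1 _].
by have := blk_uniq n i k h1 hk1 hb bk.
Qed.

Section Step3.
Variable k0 : nat.
Hypotheses (hk1 : (l0 <= k0)%N) (hk2 : (k0 < r)%N).
Local Notation mm := (r - k0.+1)%N.
Local Notation PT := ({ffun 'I_k0 -> 'I_k0.+1} * {ffun 'I_mm -> 'I_mm.+1})%type.

Definition cc (p : PT) j :=
  if (j < k0)%N then nv p.1 j else if j == k0 then 0%N else nv p.2 (j - k0.+1).

Definition phi (p : PT) : {ffun 'I_r -> 'I_r.+1} :=
  [ffun j : 'I_r => inord (cc p j + (j == l0 :> nat))].

Definition psi (n : {ffun 'I_r -> 'I_r.+1}) : PT :=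
  ([ffun i : 'I_k0 => inord (g n i)], [ffun i : 'I_mm => inord (g n (i + k0.+1))]).

Lemma cc_le p j : (cc p j + (j == l0) <= r)%N.
Proof.
rewrite /cc; case: ifP => h1.
  have := nv_le p.1 j; case: (j == l0); lia.
case: ifP => h2; first by case: (j == l0); lia.
have -> : (j == l0) = false by apply/negbTE; lia.
have := nv_le p.2 (j - k0.+1); lia.
Qed.

Lemma cc_out p j : (r <= j)%N -> cc p j = 0%N.
Proof.
move=> h; rewrite /cc ifF; last by apply/negbTE; lia.
rewrite ifF; last by apply/negbTE; lia.
by rewrite nv_out //; lia.
Qed.

Lemma nv_phi p j : nv (phi p) j = (cc p j + (j == l0))%N.
Proof.
case: (ltnP j r) => h.
  by rewrite -[j]/(nat_of_ord (Ordinal h)) nvE ffunE inordK // ltnS cc_le.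
rewrite nv_out // cc_out //; have -> : (j == l0) = false by apply/negbTE; lia.
by [].
Qed.

Lemma g_phi p j : g (phi p) j = cc p j.
Proof. by rewrite /g nv_phi addnK. Qed.

Lemma ps_cc_lo p j : (j <= k0)%N -> ps (cc p) j = ps (nv p.1) j.
Proof. move=> h; apply: ps_ext => i hi; rewrite /cc ifT //; lia. Qed.

Lemma ps_cc_hi p i : ps (cc p) (k0.+1 + i) = (ps (nv p.1) k0 + ps (nv p.2) i)%N.
Proof.
rewrite ps_shift psS ps_cc_lo // {1}/cc ltnn eqxx addn0; congr addn.
apply: ps_ext => t _; rewrite /cc ifF; last by apply/negbTE; lia.
by rewrite ifF ?addnK //; apply/negbTE; lia.
Qed.

Lemma nv1_out (p : PT) j : (k0 <= j)%N -> ps (nv p.1) j = ps (nv p.1) k0.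
Proof.
move=> h; rewrite -(subnKC h) ps_shift; have -> : ps (fun i => nv p.1 (i + k0)) (j - k0) = 0%N.
  by rewrite /ps big1 // => i _; rewrite nv_out //; lia.
by rewrite addn0.
Qed.

Lemma PP_blk_phi p : PP (phi p) && blk k0 (phi p) = Sb k0 (nv p.1) && Sb mm (nv p.2).
Proof.
have hpos : (0 < nv (phi p) l0)%N by rewrite nv_phi eqxx addn1.
have eC : forall j, ps (nv (phi p)) j = (ps (cc p) j + (l0 < j))%N.
  move=> j; rewrite (ps_g _ hpos); congr addn; apply: ps_ext => i _; exact: g_phi.
have eG : forall j, ps (g (phi p)) j = ps (cc p) j.
  move=> j; apply: ps_ext => i _; exact: g_phi.
have eR : r = (k0.+1 + mm)%N by lia.
rewrite /PP /blk hpos andbT !eG.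
apply/idP/idP.
- move=> /andP [/SbP [h1 h2] /andP [/eqP h3 /forallP h4]].
  have hA : ps (nv p.1) k0 = k0.
    by move: h3; rewrite psS ps_cc_lo // /cc ltnn eqxx addn0.
  apply/andP; split; apply/SbP; split => //.
  + move=> j hj; have := h2 j (ltn_trans hj hk2); rewrite eC ps_cc_lo; last by lia.
    case: (ltnP l0 j) => hlj; last by rewrite /=; lia.
    have hj1 : (j.-1 < k0)%N by lia.
    have := implyP (h4 (Ordinal hj1)) ltac:(simpl; lia).
    rewrite /= prednK; last lia.
    rewrite eG ps_cc_lo; last lia.
    move=> /eqP; lia.
  + move: h1; rewrite eC hl {1}eR ps_cc_hi hA; lia.
  + move=> i hi; have := h2 (k0.+1 + i)%N ltac:(lia).
    rewrite eC ps_cc_hi hA; have -> : (l0 < k0.+1 + i)%N by lia.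
    lia.
- move=> /andP [/SbP [a1 a2] /SbP [b1 b2]].
  have hCk : ps (cc p) k0.+1 = k0 by rewrite psS ps_cc_lo // a1 /cc ltnn eqxx addn0.
  rewrite hCk eqxx andTb; apply/andP; split.
  + apply/SbP; split.
      by rewrite eC hl {1}eR ps_cc_hi a1 b1; lia.
    move=> j hj; rewrite eC.
    case: (leqP j k0) => hjk.
      rewrite ps_cc_lo //; case: (ltnP j k0) => hjk'.
        by have := a2 j hjk'; lia.
      have hj' : j = k0 by lia.
      by rewrite hj' a1; lia.
    have -> : j = (k0.+1 + (j - k0.+1))%N by lia.
    rewrite ps_cc_hi a1; have := b2 (j - k0.+1)%N ltac:(lia).
    have -> : (l0 < k0.+1 + (j - k0.+1))%N by lia.
    lia.
  + apply/forallP => j; apply/implyP => hj.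
    rewrite eG ps_cc_lo; last by have := ltn_ord j; lia.
    case: (ltnP j.+1 k0) => hjk.
      by have := a2 _ hjk; lia.
    have -> : j.+1 = k0 by have := ltn_ord j; lia.
    by rewrite a1; have := ltn_ord j; lia.
Qed.

Lemma psi_phi p : psi (phi p) = p.
Proof.
case: p => p1 p2; rewrite /psi; congr pair; apply/ffunP => i; apply: val_inj;
  rewrite ffunE /= g_phi /cc.
  by rewrite ifT ?ltn_ord // nvE inordK.
rewrite ifF; last by apply/negbTE; lia.
rewrite ifF; last by apply/negbTE; lia.
by rewrite addnK nvE inordK.
Qed.

Lemma phi_psi n : PP n && blk k0 n -> phi (psi n) = n.
Proof.
move=> /andP [/andP [/SbP [h1 h2] h3] /andP [/eqP h4 /forallP h5]].
have eG := ps_g n h3.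
have gk0 : ps (g n) k0 = k0.
  have := h2 k0 hk2; rewrite eG.
  have := @ps_mono (g n) _ _ (leqnSn k0); rewrite h4.
  case: (ltnP l0 k0) => hlk; last by rewrite /=; lia.
  have hj1 : (k0.-1 < k0)%N by lia.
  have := implyP (h5 (Ordinal hj1)) ltac:(simpl; lia).
  rewrite /= prednK; last lia.
  move=> /eqP; lia.
have gk : g n k0 = 0%N by move: h4; rewrite psS gk0; lia.
have hr : ps (g n) r = r.-1 by have := eG r; rewrite h1 hl; lia.
apply: nv_inj => j hj; rewrite nv_phi /cc.
case: ifP => hjk.
  rewrite -[j]/(nat_of_ord (Ordinal hjk)) nvE ffunE inordK /=.
    by rewrite /g; case: eqP => [->|]; lia.
  have := @ps_mono (g n) _ _ hjk; rewrite psS gk0; lia.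
case: ifP => hjk2.
  move/eqP: hjk2 => ->; move: gk; rewrite /g; case: eqP => [->|]; lia.
have hi : (j - k0.+1 < mm)%N by lia.
rewrite -[(j - k0.+1)%N]/(nat_of_ord (Ordinal hi)) nvE ffunE inordK /=.
  rewrite subnK; last lia.
  have hjl : (j == l0) = false by apply/negbTE; lia.
  by rewrite /g hjl subn0 addn0.
rewrite subnK; last lia.
have := @ps_mono (g n) j.+1 r hj; rewrite psS hr.
have := @ps_mono (g n) k0.+1 j ltac:(lia); rewrite h4; lia.
Qed.

Lemma W_phi p : W (phi p) = (\prod_(j < k0) E (nv p.1 j) (a j.+1)) *
   \prod_(i < mm) E (nv p.2 i) ((fun t => a (t + k0.+1)%N) i.+1).
Proof.
have -> : W (phi p) = \prod_(0 <= j < r) E (cc p j) (a j.+1).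
  by rewrite big_mkord; apply: eq_bigr => j _; rewrite g_phi.
rewrite (big_cat_nat (leq0n k0.+1) hk2) /= big_nat_recr //= {2}/cc ltnn eqxx E0 mulr1.
congr (_ * _).
  rewrite big_mkord; apply: eq_bigr => j _.
  by rewrite /cc ltn_ord.
rewrite -{1}(add0n k0.+1) big_addn big_mkord; apply: eq_bigr => i _.
have hi := ltn_ord i.
rewrite /cc ifF; last by apply/negbTE; lia.
by rewrite ifF ?addnK //; apply/negbTE; lia.
Qed.

Lemma step3 : \sum_(n | PP n && blk k0 n) W n =
  (\sum_(m : {ffun 'I_k0 -> 'I_k0.+1} | Sb k0 (nv m)) \prod_(j < k0) E (nv m j) (a j.+1)) *
  (\sum_(m : {ffun 'I_mm -> 'I_mm.+1} | Sb mm (nv m))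
      \prod_(i < mm) E (nv m i) ((fun t => a (t + k0.+1)%N) i.+1)).
Proof.
rewrite big_distrlr /= pair_big_dep /= (reindex_onto phi psi phi_psi) /=.
apply: eq_big => p; first by rewrite PP_blk_phi psi_phi eqxx andbT.
by move=> _; rewrite W_phi.
Qed.
End Step3.

Lemma core : (-1) ^+ r * \sum_(n : {ffun 'I_r -> 'I_r.+1} | Sb r (nv n))
   \prod_(j < r) (if (j : nat) == l0 then D (nv n j) (a j.+1) else E (nv n j) (a j.+1))
  = - \sum_(l0 <= k0 < r) C1 k0 a * C1 (r - k0.+1) (fun i => a (i + k0.+1)%N).
Proof.
rewrite step1 step2 mulr_sumr -sumrN; apply: eq_big_nat => k0 /andP [h1 h2].
rewrite step3 // !C1E.
have hs : (-1) ^+ r = (-1) * ((-1) ^+ k0 * (-1) ^+ (r - k0.+1)) :> R.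
  rewrite -exprD -exprS; congr (_ ^+ _); lia.
rewrite hs; ring.
Qed.
End Core.

Arguments E {R}.
Arguments D {R}.
Arguments C1E {R}.

Section Final.
Variable R : realType.
Local Open Scope ring_scope.

Lemma dE p (x : R) : is_derive x 1 (E p) (D p x).
Proof.
have -> : @E R p = (fun t : R => (p`!)%:R^-1 * bernoulli_poly p t).
  by apply: funext => t; rewrite /E mulrC.
apply: (is_derive_eq (dcM ((p`!)%:R^-1) (@is_derive_bern R p x))).
case: p => [|p] /=; first by rewrite mul0r mulr0.
rewrite /E factS natrM invfM.
have h1 : (p.+1)%:R != 0 :> R by rewrite pnatr_eq0.
have h2 : (p`!)%:R != 0 :> R by rewrite pnatr_eq0 -lt0n fact_gt0.
by rewrite -mulrA mulrCA mulKf // mulrC.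
Qed.

Lemma dprod n (F : nat -> R -> R) (F' : nat -> R) (x : R) :
  (forall j, (j < n)%N -> is_derive x 1 (F j) (F' j)) ->
  is_derive x 1 (fun t => \prod_(j < n) F j t)
    (\sum_(j0 < n) \prod_(j < n) (if (j : nat) == (j0 : nat) then F' j else F j x)).
Proof.
elim: n => [|n IH] H.
  rewrite big_ord0; have -> : (fun t => \prod_(j < 0) F j t) = (fun _ => 1).
    by apply: funext => t; rewrite big_ord0.
  exact: dC.
have -> : (fun t => \prod_(j < n.+1) F j t) = (fun t => (\prod_(j < n) F j t) * F n t).
  by apply: funext => t; rewrite big_ord_recr.
have IH' := IH (fun j hj => H j (ltnW hj)).
apply: (is_derive_eq (dM IH' (H n (ltnSn n)))) => /=.
have e1 : \sum_(j0 < n.+1) \prod_(j < n.+1) (if (j : nat) == (j0 : nat) then F' j else F j x)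
  = (\sum_(j0 < n) \prod_(j < n) (if (j : nat) == (j0 : nat) then F' j else F j x)) * F n x
    + (\prod_(j < n) F j x) * F' n.
  rewrite big_ord_recr /= mulr_suml; congr (_ + _).
    by apply: eq_bigr => j0 _; rewrite big_ord_recr /= (gtn_eqF (ltn_ord j0)).
  rewrite big_ord_recr /= eqxx; congr (_ * _); apply: eq_bigr => j _.
  by rewrite (ltn_eqF (ltn_ord j)).
rewrite e1; ring.
Qed.

Lemma sum_tri (F : nat -> R) n :
  \sum_(1 <= l < n.+1) \sum_(l <= k < n.+1) F k = \sum_(1 <= k < n.+1) k%:R * F k.
Proof.
elim: n => [|n IH]; first by rewrite !big_geq.
rewrite (big_nat_recr n.+1) //= [RHS](big_nat_recr n.+1) //= -IH big_nat1.
rewrite (eq_big_nat _ _ (F2 := fun l => \sum_(l <= k < n.+1) F k + F n.+1)); last first.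
  by move=> l /andP [_ hl]; rewrite big_nat_recr // ltnW.
rewrite big_split /= sumr_const_nat subn1 /= -mulr_natr mulrSr; ring.
Qed.

End Final.

Unset Implicit Arguments.
Theorem lemma6p9 (R : realType) (r : nat) (hr : (1 <= r)%N) :
  (forall (l : nat) (a : nat -> R), (1 <= l <= r)%N ->
     is_derive (a l) 1 (fun t : R => C1 r (upd a l t))
       (- \sum_(l <= k < r.+1)
            C1 k.-1 a * C1 (r - k) (fun i => a (i + k)%N)))
  /\
  (forall x : R,
     is_derive x 1 (fun t : R => C1 r (fun _ => t))
       (- \sum_(1 <= l < r.+1) \sum_(l <= k < r.+1)
            C1 k.-1 (fun _ => x) * C1 (r - k) (fun _ => x)))
  /\
  (forall x : R,
     \sum_(1 <= l < r.+1) \sum_(l <= k < r.+1)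
        C1 k.-1 (fun _ => x) * C1 (r - k) (fun _ => x)
     = \sum_(1 <= k < r.+1) k%:R * C1 (r - k) (fun _ => x) * C1 k.-1 (fun _ => x)).
Proof.
split; last split.
- move=> l a /andP [hl1 hl2].
  have hl : (l.-1 < r)%N by lia.
  have el : l = l.-1.+1 by lia.
  have eS : \sum_(l <= k < r.+1) C1 k.-1 a * C1 (r - k) (fun i => a (i + k)%N)
    = \sum_(l.-1 <= k0 < r) C1 k0 a * C1 (r - k0.+1) (fun i => a (i + k0.+1)%N).
    by rewrite {1}el big_add1.
  rewrite eS -(core R r l.-1 a hl).
  have -> : (fun t : R => C1 r (upd a l t)) = (fun t => (-1) ^+ r *
     \sum_(n : {ffun 'I_r -> 'I_r.+1} | Sb r (nv n)) \prod_(j < r) E (nv n j) (upd a l t j.+1)).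
    by apply: funext => t; rewrite C1E.
  apply: dcM; apply: dsum => n.
  have Hd := @dprod R r (fun j t => E (nv n j) (upd a l t j.+1))
      (fun j => if j.+1 == l then D (nv n j) (a l) else 0) (a l).
  apply: (is_derive_eq (Hd _)).
    move=> j _; case: eqP => hj.
      have -> : (fun t => E (nv n j) (upd a l t j.+1)) = E (nv n j).
        by apply: funext => t; rewrite /upd hj eqxx.
      exact: dE.
    have -> : (fun t => E (nv n j) (upd a l t j.+1)) = (fun _ => E (nv n j) (a j.+1)).
      by apply: funext => t; rewrite /upd; move/eqP/negbTE: hj => ->.
    exact: dC.
  have ua : forall j, upd a l (a l) j = a j by move=> j; rewrite /upd; case: eqP => [->|].
  rewrite (bigD1 (Ordinal hl)) //=.
  rewrite [X in _ + X = _]big1 ?addr0; last first.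
    move=> j0 hj0; rewrite (bigD1 j0) //= eqxx.
    have -> : (j0 : nat).+1 == l = false.
      apply/negbTE; apply: contra hj0 => /eqP h; apply/eqP; apply: val_inj => /=; lia.
    by rewrite mul0r.
  rewrite (eq_bigr (fun j : 'I_r => if (j : nat) == l.-1 then D (nv n j) (a j.+1)
     else E (nv n j) (a j.+1))) // => j _; rewrite ua; case: eqP => [->|hj] //.
  by rewrite -el eqxx.
- move=> x.
  have -> : (fun t : R => C1 r (fun _ => t)) = (fun t => (-1) ^+ r *
     \sum_(n : {ffun 'I_r -> 'I_r.+1} | Sb r (nv n)) \prod_(j < r) E (nv n j) t).
    by apply: funext => t; rewrite C1E.
  have Hs := @dsum R _ (fun n : {ffun 'I_r -> 'I_r.+1} => Sb r (nv n))
    (fun n t => \prod_(j < r) E (nv n j) t) _ x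
    (fun n => @dprod R r (fun j => E (nv n j)) (fun j => D (nv n j) x) x
       (fun j _ => dE R (nv n j) x)).
  apply: (is_derive_eq (dcM ((-1) ^+ r) Hs)).
  rewrite exchange_big /= mulr_sumr.
  rewrite (eq_bigr (fun j0 : 'I_r => - \sum_(j0 <= k0 < r)
     C1 k0 (fun _ : nat => x) * C1 (r - k0.+1) (fun _ : nat => x))); last first.
    move=> j0 _; exact: (core R r j0 (fun _ => x) (ltn_ord j0)).
  rewrite sumrN; congr (- _); rewrite big_add1 /= big_mkord; apply: eq_bigr => l _.
  by rewrite big_add1.
- move=> x; rewrite sum_tri; apply: eq_bigr => k _; ring.
Qed.
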